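(* Let $V$ be a nonempty finite set and let $B \subseteq \mathbb{Z}^V$ be a nonempty set satisfying ($\Delta$-EXC): for any $p, q \in B$ and any $u \in \operatorname{supp}(q-p)$, there exists $\alpha \in \Phi_B(p,q)$ with $u \in \operatorname{supp}(\alpha)$. Let $q, r \in B$ with $q \neq r$. Then there exist $k, l \ge 1$ and vectors $\alpha_1, \dots, \alpha_k \in \Phi_B(q,r)$ and $\beta_1, \dots, \beta_l \in \Phi_B(r,q)$ (not necessarily distinct) such that $\sum_{i=1}^k \alpha_i + \sum_{j=1}^l \beta_j = \mathbf{0}$.
   Context: For $t \in \mathbb{R}^V$, $\operatorname{supp}(t) = \{u \in V : t(u) \neq 0\}$; $\|p\|_1 = \sum_{u \in V}|p(u)|$; $\chi_u$ is the $u$-th unit vector. Let $\Phi = \{\pm \chi_u : u \in V\} \cup \{\pm\chi_u \pm \chi_v : u, v \in V, u \ne v\}$. For $p, q \in \mathbb{Z}^V$, $\Phi(p,q) = \{\alpha \in \Phi : \|q - (p+\alpha)\|_1 = \|q-p\|_1 - \|\alpha\|_1\}$, and for $B \subseteq \mathbb{Z}^V$ and $p,q \in B$, $\Phi_B(p,q) = \{\alpha \in \Phi(p,q) : p + \alpha \in B\}$. *)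

(* Defs.v *)
From mathcomp Require Import all_boot all_order all_algebra.
Set Implicit Arguments. Unset Strict Implicit. Unset Printing Implicit Defensive.
Import Order.TTheory GRing.Theory Num.Theory.
Local Open Scope ring_scope.

Notation vec V := {ffun V -> int}.

Definition supp (V : finType) (t : vec V) : {set V} := [set u | t u != 0].

Definition norm1 (V : finType) (p : vec V) : int := \sum_(u : V) `|p u|.

Definition chi (V : finType) (u : V) : vec V := [ffun w => (w == u)%:Z].

Definition sgn (b : bool) : int := if b then 1 else -1.

Definition inPhi (V : finType) (a : vec V) : Prop :=
  (exists (u : V) (s : bool), a = [ffun w => sgn s * chi u w]) \/
  (exists (u v : V) (s t : bool), u != v /\ a = [ffun w => sgn s * chi u w + sgn t * chi v w]).

Definition PhiPQ (V : finType) (p q a : vec V) : Prop :=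
  inPhi a /\ norm1 (q - (p + a)) = norm1 (q - p) - norm1 a.

Definition PhiB (V : finType) (B : vec V -> Prop) (p q a : vec V) : Prop :=
  PhiPQ p q a /\ B (p + a).

Definition delta_exc (V : finType) (B : vec V -> Prop) : Prop :=
  forall p q : vec V, B p -> B q ->
  forall u : V, u \in supp (q - p) ->
  exists a : vec V, PhiB B p q a /\ u \in supp a.

(* Main.v *)
Require Import Defs.
From mathcomp Require Import all_boot all_order all_algebra zify.
From Stdlib Require Import Classical ClassicalEpsilon.
Import Order.TTheory GRing.Theory Num.Theory.
Local Open Scope ring_scope.
Set Implicit Arguments. Unset Strict Implicit.

Lemma walk (T : finType) (f : T -> T) (good : pred T) (col : T -> bool) s0 :
  good s0 -> (forall s, good s -> good (f s)) -> (forall s, col (f s) = ~~ col s) ->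
  exists s k, good s /\ (1 < k)%N /\ iter k f s = s.
Proof.
move=> g0 gf cf.
have gi : forall n, good (iter n f s0) by elim=> //= n IH; exact: gf.
have [i [j [lij eij]]] : exists i j : nat, (i < j)%N /\ iter i f s0 = iter j f s0.
  apply: NNPP => Hn.
  pose h := fun i : 'I_#|T|.+1 => iter i f s0.
  have injh : injective h.
    move=> x y hxy; apply: val_inj; case: (ltngtP x y) => // hlt; exfalso; apply: Hn.
      by exists x, y.
    by exists y, x.
  have := leq_card _ injh. rewrite card_ord. rewrite ltnn. done.
exists (iter i f s0), (j - i)%N. split; first exact: gi.
have ek : iter (j - i) f (iter i f s0) = iter i f s0.
  rewrite -iterD. rewrite subnK. done. exact: ltnW.
split; last done.
case E: (j - i)%N => [|[|k]].
- move: lij; rewrite -subn_gt0 E. done.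
- move: ek; rewrite E /= => ek.
  have := cf (iter i f s0). rewrite ek. by case: (col _).
- done.
Qed.
Lemma telesc (T : Type) (R : zmodType) (f : T -> T) (P W : T -> R) :
  (forall s, W s = P (f s) - P s) -> forall k s,
  \sum_(m <- iota 0 k) W (iter m f s) = P (iter k f s) - P s.
Proof.
move=> HW; elim=> [|k IH] s; first by rewrite big_nil subrr.
rewrite -addn1 iotaD big_cat /= IH big_cons big_nil addr0 HW.
rewrite add0n -iterS addn1. by rewrite addrC addrA subrK.
Qed.

Lemma sign_lem (V : finType) (p q a : vec V) z :
  PhiPQ p q a -> (a z = 1 \/ a z = -1) ->
  a z = Num.sg ((q - p) z) /\ (q - p) z != 0.
Proof.
move=> [_ hn] haz.
have pw : forall w, `|(q - p) w - a w| = `|(q - p) w| - `|a w|.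
  move=> w.
  have h0 : \sum_(w0 : V) (`|(q - p) w0 - a w0| - (`|(q - p) w0| - `|a w0|)) = 0.
    rewrite sumrB sumrB /=. move: hn; rewrite /norm1.
    have -> : \sum_u `|(q - (p + a)) u| = \sum_u `|(q - p) u - a u|.
      by apply: eq_bigr => u _; rewrite !ffunE opprD addrA.
    move=> ->; by rewrite subrr.
  have := psumr_eq0P (P := predT) _ h0 (i := w) isT.
  move/(_ _)/eqP. rewrite subr_eq0 => /(_ _)/eqP -> // i _; rewrite subr_ge0; exact: lerB_dist.
have := pw z.
case: haz => ->; move: ((q - p) z) => x h.
- have hx : 0 < x by lia.
  by rewrite gtr0_sg //; split => //; lia.
- have hx : x < 0 by lia.
  by rewrite ltr0_sg //; split => //; lia.
Qed.

Definition srcv (V : finType) (q r : vec V) (c : bool) := if c then q else r.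
Definition dstv (V : finType) (q r : vec V) (c : bool) := if c then r else q.
Definition eps (V : finType) (q r : vec V) (s : V * bool) : vec V :=
  [ffun z => Num.sg ((dstv q r s.2 - srcv q r s.2) s.1) * chi s.1 z].
Definition ga (V : finType) (q r : vec V) (s : V * bool) (w : V) : vec V :=
  if w == s.1 then eps q r s else eps q r s + eps q r (w, s.2).

Lemma eps_flip (V : finType) (q r : vec V) w c : eps q r (w, ~~ c) = - eps q r (w, c).
Proof.
apply/ffunP => z; case: c; rewrite !ffunE /=.
- by rewrite -[q w - r w]opprB sgrN mulNr.
- by rewrite -[r w - q w]opprB sgrN mulNr.
Qed.

Lemma supp_sym (V : finType) (q r : vec V) : supp (q - r) = supp (r - q).
Proof. by apply/setP => z; rewrite !inE !ffunE -opprB oppr_eq0. Qed.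

Lemma supp_x (V : finType) (q r : vec V) c w : w \in supp (dstv q r c - srcv q r c) -> w \in supp (r - q).
Proof. by case: c => //=; rewrite supp_sym. Qed.

Lemma chiE (V : finType) (u z : V) : chi u z = if z == u then 1 else 0.
Proof. by rewrite /chi ffunE; case: eqP. Qed.

Lemma sgn_pm b : sgn b = 1 \/ sgn b = -1.
Proof. by case: b; [left|right]. Qed.

Lemma spec (V : finType) (q r : vec V) (B : vec V -> Prop) s : delta_exc B -> B q -> B r ->
  s.1 \in supp (r - q) ->
  exists w, w \in supp (r - q) /\ PhiB B (srcv q r s.2) (dstv q r s.2) (ga q r s w).
Proof.
case: s => v c /= hd hq hr hv.
have [a [hphi hva]] : exists a, PhiB B (srcv q r c) (dstv q r c) a /\ v \in supp a.
  by case: c => /=; apply: hd => //; rewrite (@supp_sym _ q r).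
have [[hin hn] hB] := hphi.
have hsl := @sign_lem _ _ _ _ ^~ (conj hin hn).
rewrite inE in hva.
case: hin => [[u [b ha]] | [u [u' [b [t [huu' ha]]]]]].
- have evu : v = u.
    move: hva; rewrite ha ffunE !chiE; case: (eqVneq v u) => // _; by rewrite mulr0 eqxx.
  subst v.
  have hau : a u = sgn b by rewrite ha ffunE !chiE eqxx mulr1.
  have [hs hx] := hsl u (ltac:(rewrite hau; exact: sgn_pm)).
  exists u; split; first by apply: (@supp_x _ q r c); rewrite inE.
  rewrite /ga eqxx /=.
  have -> : eps q r (u, c) = a.
    rewrite !ffunE in hs.
    apply/ffunP => z; rewrite ha !ffunE /= -hs hau; reflexivity.
  exact: hphi.
- have hau : a u = sgn b.
    by rewrite ha ffunE !chiE eqxx (negbTE (huu')) !mulr1 mulr0 addr0.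
  have hau' : a u' = sgn t.
    by rewrite ha ffunE !chiE eqxx eq_sym (negbTE (huu')) !mulr1 mulr0 add0r.
  have [hs hx] := hsl u (ltac:(rewrite hau; exact: sgn_pm)).
  have [hs' hx'] := hsl u' (ltac:(rewrite hau'; exact: sgn_pm)).
  have hv2 : v = u \/ v = u'.
    move: hva; rewrite ha ffunE !chiE.
    case: (eqVneq v u) => [->|hvu]; first by left.
    case: (eqVneq v u') => [->|hvu']; first by right.
    by rewrite !mulr0 addr0 eqxx.
  have key : a = eps q r (u, c) + eps q r (u', c).
    rewrite !ffunE in hs hs'.
    apply/ffunP => z; rewrite ha !ffunE /= -hs -hs' hau hau'; reflexivity.
  case: hv2 => ->.
  + exists u'; split; first by apply: (@supp_x _ q r c); rewrite inE.
    by rewrite /ga /= eq_sym (negbTE huu') -key.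
  + exists u; split; first by apply: (@supp_x _ q r c); rewrite inE.
    by rewrite /ga /= (negbTE huu') addrC -key.
Qed.

Definition mult (V : finType) (s : V * bool) (w : V) : nat := if w == s.1 then 2 else 1.

Lemma sum_nseq (V : finType) (q r : vec V) s w : \sum_(i <- nseq (mult s w) (ga q r s w)) i = eps q r s + eps q r (w, s.2).
Proof.
rewrite big_nseq /mult /ga; case: eqP => [->|] /=; last by rewrite addr0.
by case: s => v c /=; rewrite addr0.
Qed.

Lemma size_mem (T : eqType) (x : T) (s : seq T) : x \in s -> (0 < size s)%N.
Proof. by case: s. Qed.

Theorem mainTheorem2 (V : finType) (B : vec V -> Prop) :
  (0 < #|V|)%N ->
  (exists p, B p) ->
  delta_exc B ->
  forall q r : vec V, B q -> B r -> q <> r ->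
  exists (al be : seq (vec V)),
    (0 < size al)%N /\ (0 < size be)%N /\
    (forall a, a \in al -> PhiB B q r a) /\
    (forall b, b \in be -> PhiB B r q b) /\
    \sum_(a <- al) a + \sum_(b <- be) b = 0.
Proof.
move=> _ _ hd q r hq hr hqr.
have [v0 hv0] : exists v, v \in supp (r - q).
  apply: NNPP => hn; apply: hqr; apply/ffunP => z.
  case: (eqVneq (r z - q z) 0) => [/eqP|h].
    by rewrite subr_eq0 => /eqP ->.
  by exfalso; apply: hn; exists z; rewrite inE !ffunE.
have H : forall s : V * bool, exists w, s.1 \in supp (r - q) ->
    w \in supp (r - q) /\ PhiB B (srcv q r s.2) (dstv q r s.2) (ga q r s w).
  move=> s; case: (boolP (s.1 \in supp (r - q))) => hs.
  - by have [w hw] := spec hd hq hr hs; exists w.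
  - by exists s.1.
have [wf Hwf] : {wf : V * bool -> V | forall s, s.1 \in supp (r - q) ->
    wf s \in supp (r - q) /\ PhiB B (srcv q r s.2) (dstv q r s.2) (ga q r s (wf s))}.
  exists (fun s => proj1_sig (constructive_indefinite_description _ (H s))).
  move=> s; exact: (proj2_sig (constructive_indefinite_description _ (H s))).
pose f := fun s : V * bool => (wf s, ~~ s.2).
pose good := fun s : V * bool => s.1 \in supp (r - q).
have [s [k [gs [hk hks]]]] := @walk _ f good snd (v0, true) hv0
   (fun s gs => (Hwf s gs).1) (fun s => erefl).
have gi : forall n, good (iter n f s) by elim=> //= n IH; exact: (Hwf _ IH).1.
pose L := [seq iter i f s | i <- iota 0 k].
have gL : forall t, t \in L -> good t by move=> t /mapP [i _ ->]; exact: gi.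
have memP : forall (c : bool) a, a \in flatten [seq nseq (mult t (wf t)) (ga q r t (wf t)) | t <- L & t.2 == c] ->
    PhiB B (srcv q r c) (dstv q r c) a.
  move=> c a /flatten_mapP [t]; rewrite mem_filter => /andP [/eqP ht2 htL].
  rewrite mem_nseq => /andP [_ /eqP ->].
  by have := (Hwf t (gL t htL)).2; rewrite ht2.
have memI : forall (c : bool) t, t \in L -> t.2 = c ->
   ga q r t (wf t) \in flatten [seq nseq (mult t (wf t)) (ga q r t (wf t)) | t <- L & t.2 == c].
  move=> c t htL ht2; apply/flatten_mapP; exists t; first by rewrite mem_filter ht2 eqxx htL.
  by rewrite mem_nseq eqxx andbT /mult; case: ifP.
have sL : s \in L by apply/mapP; exists 0%N => //; rewrite mem_iota; lia.
have fsL : f s \in L by apply/mapP; exists 1%N => //; rewrite mem_iota; lia.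
exists (flatten [seq nseq (mult t (wf t)) (ga q r t (wf t)) | t <- L & t.2 == true]),
       (flatten [seq nseq (mult t (wf t)) (ga q r t (wf t)) | t <- L & t.2 == false]).
split.
  case E: s.2.
  - exact: size_mem (memI true s sL E).
  - apply: size_mem (memI true (f s) fsL _); by rewrite /= E.
split.
  case E: s.2.
  - apply: size_mem (memI false (f s) fsL _); by rewrite /= E.
  - exact: size_mem (memI false s sL E).
split; first exact: (memP true).
split; first exact: (memP false).
rewrite !big_flatten /= !big_map !big_filter.
under eq_bigr do rewrite sum_nseq.
under [X in _ + X = _]eq_bigr do rewrite sum_nseq.
have -> : forall (c : bool) (F : V * bool -> vec V), \sum_(t <- L | t.2 == c) F t = \sum_(t <- L | if c then t.2 else ~~ t.2) F t.
  by move=> c F; apply: eq_bigl => t; case: c; case: (t.2).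
rewrite /=.
have hsp : \sum_(t <- L) (eps q r t + eps q r (wf t, t.2)) =
  \sum_(t <- L | t.2) (eps q r t + eps q r (wf t, t.2)) + \sum_(t <- L | t.2 == false) (eps q r t + eps q r (wf t, t.2)).
  rewrite (bigID (fun t => t.2)) /=; congr (_ + _); apply: eq_bigl => t; by case: (t.2).
rewrite -hsp.
rewrite big_map.
rewrite (@telesc _ _ f (fun t => - eps q r t) (fun t => eps q r t + eps q r (wf t, t.2))) ?hks ?subrr //.
move=> t; by rewrite /f eps_flip opprK addrC opprK.
Qed.
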